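(* Assume $n\ge 3$. Consider finite compositions of the rotation-only operations $h_1(\varphi_1),\dots,h_{m-1}(\varphi_{m-1})$ and $f_m(\varphi_m)$ with real arguments (each occurrence of $h_i$, $f_m$ may be used any number of times). (a) Any such composition leaves all robot positions unchanged, and the vector of net orientation changes $(\Delta\theta_1,\dots,\Delta\theta_n)$ equals $A u \bmod 2\pi$, where $u\in\mathbb R^m$ has $u_i$ equal to the sum of the arguments of all occurrences of $h_i$ ($i<m$), resp. $f_m$ ($i=m$), and $A$ is the $n\times m$ matrix with $A_{j,i}=1-\alpha_{i,j}$ for $i<m$ and $A_{j,m}=1$. (b) For any three distinct robots $j_1,j_2,j_3$ and any target orientations $\beta_1,\beta_2,\beta_3$, there is such a composition after which robot $j_s$ has orientation $\beta_s$ (mod $2\pi$) for $s=1,2,3$. (c) Since $\operatorname{rank}A\le m$, for any set $S$ of more than $m$ robots there exist target orientations for the robots in $S$ that cannot be attained simultaneously by any such composition.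
   Context: A swarm of $n$ planar robots; robot $j$ has state $(x_j,y_j,\theta_j)$, $\theta_j$ mod $2\pi$; all robots have the same turning radius $r>0$. Groups $G_1,\dots,G_m$ with activation vectors $\alpha_i\in\{0,1\}^n$ ($\alpha_{i,j}=1$ iff robot $j\in G_i$); the patterns $(\alpha_{1,j},\dots,\alpha_{m-1,j})$, $j=1,\dots,n$, are pairwise distinct, none all zeros, none all ones; $G_m=\emptyset$. Dynamics: one group $\nu(t)$ active at a time, input $u(t)>0$; with $a_j=\alpha_{\nu(t),j}$: $\dot x_j=a_j\cos\theta_j u$, $\dot y_j=a_j\sin\theta_j u$, $\dot\theta_j=(1-a_j)u/r$. $f_m(\varphi)$ ($\varphi>0$) = activate $G_m$ with $\int u\,dt=r\varphi$, rotating every robot in place by $\varphi$; for real $\varphi$ it is interpreted mod $2\pi$ (as $f_m$ of a positive representative). $h_i(\varphi)$ ($i<m$, $\varphi\in\mathbb R$): an activation sequence (which exists) whose net effect leaves members of $G_i$ unchanged and keeps non-members in place with orientation increased by $\varphi$ mod $2\pi$. *)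

(* Defs.v *)
From HB Require Import structures.
From mathcomp Require Import all_boot all_order all_algebra.
From mathcomp Require Import all_classical all_reals all_analysis.
Set Implicit Arguments. Unset Strict Implicit. Unset Printing Implicit Defensive.
Import Order.TTheory GRing.Theory Num.Theory.
Local Open Scope ring_scope.

Section Robots.
Variables (R : realType) (n : nat).

(* State of the swarm: positions (x_j, y_j) and orientations theta_j (real
   representatives; orientations are compared modulo 2*pi). *)
Record state := State { sx : 'I_n -> R; sy : 'I_n -> R; sth : 'I_n -> R }.

Definition eqmod2pi (a b : R) : Prop := exists z : int, a = b + z%:~R * (2 * pi).

(* Net effect of activating the group with indicator a : 'I_n -> bool with
   total input  int u dt = s  (s > 0), obtained by integrating the dynamics
   x' = a cos(th) u, y' = a sin(th) u, th' = (1-a) u / r :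
   active robots keep their heading and move straight by s,
   inactive robots stay in place and turn by s / r. *)
Definition activate (r : R) (a : 'I_n -> bool) (s : R) (st : state) : state :=
  State (fun j => sx st j + (a j)%:R * cos (sth st j) * s)
        (fun j => sy st j + (a j)%:R * sin (sth st j) * s)
        (fun j => sth st j + (1 - (a j)%:R) * s / r).

(* positive representative of phi modulo 2 pi, in (0, 2 pi] *)
Definition posrep (phi : R) : R :=
  phi - (Num.floor (phi / (2 * pi)))%:~R * (2 * pi) + 2 * pi.

(* f_m(phi): activate the empty group G_m with int u dt = r * phi
   (phi real, replaced by its positive representative mod 2 pi). *)
Definition f_m (r : R) (phi : R) (st : state) : state :=
  activate r (fun _ => false) (r * posrep phi) st.

Definition h_eff (a : 'I_n -> bool) (phi : R) (st : state) : state :=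
  State (sx st) (sy st) (fun j => if a j then sth st j else sth st j + phi).

End Robots.

(* Rotation-only operations, for k = m-1 non-empty groups G_1..G_k
   (indexed by 'I_k) plus the empty group G_m. *)
Inductive rop (R : Type) (k : nat) :=
  | Hop of 'I_k & R
  | Fop of R.

Section Ops.
Variables (R : realType) (n k : nat) (r : R) (alpha : 'I_k -> 'I_n -> bool).

Definition apply_rop (o : rop R k) (st : state R n) : state R n :=
  match o with
  | Hop i phi => h_eff (alpha i) phi st
  | Fop phi => f_m r phi st
  end.

Definition run (ops : seq (rop R k)) (st : state R n) : state R n :=
  foldl (fun s o => apply_rop o s) st ops.

(* contribution of an operation to the coordinate i of u (i : 'I_m, m = k+1,
   the last index ord_max corresponding to f_m) *)
Definition contrib (o : rop R k) (i : 'I_k.+1) : R :=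
  match o, unlift ord_max i with
  | Hop i' phi, Some i'' => if i' == i'' then phi else 0
  | Fop phi, None => phi
  | _, _ => 0
  end.

Definition uvec (ops : seq (rop R k)) : 'cV[R]_k.+1 :=
  \col_i \sum_(o <- ops) contrib o i.

Definition Amat : 'M[R]_(n, k.+1) :=
  \matrix_(j, i) match unlift ord_max i with
                 | Some i' => 1 - (alpha i' j)%:R
                 | None => 1
                 end.

End Ops.

(* Main.v *)
Require Import Defs.
From HB Require Import structures.
From mathcomp Require Import all_boot all_order all_algebra.
From mathcomp Require Import all_classical all_reals all_analysis.
From mathcomp Require Import ring lra zify.
Import Order.TTheory GRing.Theory Num.Theory.
Local Open Scope ring_scope.
Set Implicit Arguments. Unset Strict Implicit.

Section Help.
Variables (R : realType) (n k : nat) (r : R) (alpha : 'I_k -> 'I_n -> bool).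
Hypothesis hr : 0 < r.

Definition eff (o : rop R k) (j : 'I_n) : R :=
  match o with Hop i phi => if alpha i j then 0 else phi | Fop phi => phi end.

Lemma widen_lift (i : 'I_k) : widen_ord (leqnSn k) i = lift ord_max i.
Proof. by apply: val_inj; rewrite /= /bump leqNgt ltn_ord. Qed.

Lemma Amat_max j : Amat R alpha j ord_max = 1.
Proof. by rewrite mxE unlift_none. Qed.

Lemma Amat_lift j i : Amat R alpha j (lift ord_max i) = 1 - (alpha i j)%:R.
Proof. by rewrite mxE liftK. Qed.

Lemma Au_expand (u : 'cV[R]_k.+1) j :
  (Amat R alpha *m u) j 0 =
  \sum_(i < k) (if alpha i j then 0 else u (lift ord_max i) 0) + u ord_max 0.
Proof.
rewrite mxE big_ord_recr /= Amat_max mul1r; congr (_ + _).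
apply: eq_bigr => i _; rewrite widen_lift Amat_lift.
by case: (alpha i j); rewrite /= ?subrr ?mul0r ?subr0 ?mul1r.
Qed.

Lemma eff_contrib o j :
  \sum_(i < k.+1) Amat R alpha j i * contrib o i = eff o j.
Proof.
rewrite big_ord_recr /=.
under eq_bigr => i _ do rewrite widen_lift Amat_lift /contrib liftK.
rewrite Amat_max /contrib unlift_none.
case: o => [i' phi|phi] /=.
  rewrite mulr0 addr0 (bigD1 i') //= eqxx big1 ?addr0.
    by case: (alpha i' j); rewrite /= ?subrr ?mul0r ?subr0 ?mul1r.
  by move=> i /negbTE; rewrite eq_sym => ->; rewrite mulr0.
by rewrite big1 ?add0r ?mul1r // => i _; rewrite mulr0.
Qed.

Lemma Au_eff ops j :
  (Amat R alpha *m uvec ops) j 0 = \sum_(o <- ops) eff o j.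
Proof.
rewrite mxE.
under eq_bigr => i _ do rewrite [X in _ * X]mxE mulr_sumr.
rewrite exchange_big /=; apply: eq_bigr => o _; exact: eff_contrib.
Qed.

Lemma step_spec o st :
  sx (apply_rop r alpha o st) = sx st /\ sy (apply_rop r alpha o st) = sy st /\
  forall j, exists z : int,
    sth (apply_rop r alpha o st) j = sth st j + eff o j + z%:~R * (2 * pi).
Proof.
case: o => [i phi|phi] /=.
  split=> //; split=> // j; exists 0; rewrite mul0r addr0.
  by case: (alpha i j); rewrite ?addr0.
rewrite /f_m /activate /=; split; last split.
- by apply: funext => j; rewrite /= mul0r mul0r addr0.
- by apply: funext => j; rewrite /= mul0r mul0r addr0.
move=> j; exists (1 - Num.floor (phi / (2 * pi))).
rewrite /posrep intrB /=.
have r0 : r != 0 by rewrite gt_eqF.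
field.
exact: r0.
Qed.

Lemma run_spec ops st :
  sx (run r alpha ops st) = sx st /\ sy (run r alpha ops st) = sy st /\
  forall j, exists z : int,
    sth (run r alpha ops st) j = sth st j + \sum_(o <- ops) eff o j + z%:~R * (2 * pi).
Proof.
elim: ops st => [|o ops IH] st.
  split=> //; split=> // j; exists 0; by rewrite big_nil mul0r !addr0.
have [h1 [h2 h3]] := step_spec o st.
have [i1 [i2 i3]] := IH (apply_rop r alpha o st).
rewrite /run /= -/(run r alpha ops _).
split; first by rewrite i1.
split; first by rewrite i2.
move=> j; have [z1 e1] := h3 j; have [z2 e2] := i3 j.
exists (z1 + z2); rewrite e2 e1 big_cons intrD; ring.
Qed.

End Help.

Lemma sep3 (R : realType) (a b c : R) (x y z : bool) :
  a + b + c = 0 -> a * (1 - x%:R) + b * (1 - y%:R) + c * (1 - z%:R) = 0 ->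
  x <> y -> a = 0 \/ b = 0.
Proof.
move=> h1; case: x; case: y; case: z => //= h2 _;
  rewrite ?mulr1n ?mulr0n ?subrr ?subr0 ?mulr0 ?mulr1 in h2;
  first [left; lra | right; lra].
Qed.

Section Help2.
Variables (R : realType) (n k : nat) (r : R) (alpha : 'I_k -> 'I_n -> bool).

Definition realize (u : 'cV[R]_k.+1) : seq (rop R k) :=
  [seq Hop i (u (lift ord_max i) 0) | i <- index_enum 'I_k] ++ [:: @Fop R k (u ord_max 0)].

Lemma realize_eff u j :
  \sum_(o <- realize u) eff alpha o j = (Amat R alpha *m u) j 0.
Proof.
by rewrite Au_expand big_cat big_map /= big_cons big_nil addr0.
Qed.

Lemma key3 (j1 j2 j3 : 'I_n)
    (hdistinct : forall j1 j2 : 'I_n, j1 <> j2 -> exists i, alpha i j1 <> alpha i j2) :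
  j1 <> j2 -> j1 <> j3 -> j2 <> j3 ->
  forall a b c : R,
  (forall i, a * Amat R alpha j1 i + b * Amat R alpha j2 i + c * Amat R alpha j3 i = 0) ->
  a = 0 /\ b = 0 /\ c = 0.
Proof.
move=> d12 d13 d23 a b c E.
have h0 := E ord_max; rewrite !Amat_max !mulr1 in h0.
have L i := E (lift ord_max i); rewrite /= in L.
have [i12 s12] := hdistinct _ _ d12.
have [i13 s13] := hdistinct _ _ d13.
have [i23 s23] := hdistinct _ _ d23.
have e12 := L i12; rewrite !Amat_lift in e12.
have e13 := L i13; rewrite !Amat_lift in e13.
have e23 := L i23; rewrite !Amat_lift in e23.
have o12 := sep3 h0 e12 s12.
have o13 : a = 0 \/ c = 0.
  apply: (sep3 (a := a) (b := c) (c := b) (z := alpha i13 j2) _ _ s13); lra.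
have o23 : b = 0 \/ c = 0.
  apply: (sep3 (a := b) (b := c) (c := a) (z := alpha i23 j1) _ _ s23); lra.
by case: o12 => ?; case: o13 => ?; case: o23 => ?; (split; [|split]); lra.
Qed.
End Help2.

Lemma solve3 (R : realType) (n k : nat) (alpha : 'I_k -> 'I_n -> bool)
    (hdistinct : forall j1 j2 : 'I_n, j1 <> j2 -> exists i, alpha i j1 <> alpha i j2)
    (j1 j2 j3 : 'I_n) (d1 d2 d3 : R) :
  j1 <> j2 -> j1 <> j3 -> j2 <> j3 ->
  exists u : 'cV[R]_k.+1,
    (Amat R alpha *m u) j1 0 = d1 /\ (Amat R alpha *m u) j2 0 = d2 /\
    (Amat R alpha *m u) j3 0 = d3.
Proof.
move=> d12 d13 d23.
pose jj (s : 'I_3) := nth j1 [:: j1; j2; j3] s.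
pose C : 'M[R]_(3, k.+1) := \matrix_(s, i) Amat R alpha (jj s) i.
have fr : row_free C.
  rewrite -kermx_eq0; apply/eqP/row_matrixP => s; rewrite row0.
  set w := row s (kermx C).
  have hw : w *m C = 0 by rewrite /w -row_mul mulmx_ker row0.
  clearbody w.
  have hC s1 i : C s1 i = Amat R alpha (jj s1) i by rewrite mxE.
  have E i : w 0 ord0 * Amat R alpha j1 i + w 0 (lift ord0 ord0) * Amat R alpha j2 i
      + w 0 (lift ord0 (lift ord0 ord0)) * Amat R alpha j3 i = 0.
    have := congr1 (fun M : 'M[R]_(1, k.+1) => M 0 i) hw; rewrite mxE !big_ord_recl big_ord0 !hC addr0 /= addrA.
    by rewrite [X in _ = X -> _]mxE => h; exact: h.
  have [h1 [h2 h3]] := key3 hdistinct d12 d13 d23 E.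
  apply/rowP => s'; rewrite mxE.
  case: s' => [[|[|[|m]]] hm] //.
  - by rewrite -h1; congr (w 0 _); apply: val_inj.
  - by rewrite -h2; congr (w 0 _); apply: val_inj.
  - by rewrite -h3; congr (w 0 _); apply: val_inj.
have [B hB] := row_freeP fr.
pose d : 'cV[R]_3 := \col_s nth 0 [:: d1; d2; d3] s.
exists (B *m d).
have H s : (Amat R alpha *m (B *m d)) (jj s) 0 = d s 0.
  have -> : (Amat R alpha *m (B *m d)) (jj s) 0 = (C *m (B *m d)) s 0.
    rewrite [LHS]mxE [RHS]mxE; apply: eq_bigr => i _; by rewrite [C _ _]mxE.
  by rewrite mulmxA hB mul1mx.
have := H ord0; have := H (lift ord0 ord0); have := H (lift ord0 (lift ord0 ord0)).
rewrite !mxE /= => h3 h2 h1; by split; [|split].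
Qed.

Lemma partc (R : realType) (n k : nat) (r : R) (alpha : 'I_k -> 'I_n -> bool)
    (hr : 0 < r) (S : {set 'I_n}) (st : state R n) : (k.+1 < #|S|)%N ->
  exists beta : 'I_n -> R,
    ~ exists ops : seq (rop R k),
        forall j, j \in S -> eqmod2pi (sth (run r alpha ops st) j) (beta j).
Proof.
move=> hS.
pose Aint (j : 'I_n) (i : 'I_k.+1) : int :=
  match unlift ord_max i with Some i' => 1 - (alpha i' j)%:R | None => 1 end.
have AE j i : Amat R alpha j i = (Aint j i)%:~R.
  rewrite mxE /Aint; case: unlift => [i'|] //=.
  by case: (alpha i' j); rewrite /= ?subrr ?subr0.
pose Bq : 'M[rat]_(#|S|, k.+1) := \matrix_(t, i) (Aint (enum_val t) i)%:~R.
have hk : kermx Bq != 0.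
  apply/negP => /eqP h0; have := mxrank_ker Bq; rewrite h0 mxrank0.
  have := rank_leq_col Bq; lia.
have [s hs] : exists s, row s (kermx Bq) != 0.
  apply/existsP; move: hk; apply: contraNT => /existsPn H.
  apply/eqP/row_matrixP => s; rewrite row0; apply/eqP; exact/negPn/H.
set v := row s (kermx Bq) in hs.
have hv : v *m Bq = 0 by rewrite /v -row_mul mulmx_ker row0.
clearbody v.
have [t0 ht0] : exists t0, v 0 t0 != 0.
  apply/existsP; move: hs; apply: contraNT => /existsPn H.
  apply/eqP/rowP => t; rewrite [RHS]mxE; apply/eqP; exact/negPn/H.
pose D : int := \prod_t denq (v 0 t).
pose w t : int := numq (v 0 t) * \prod_(t' | t' != t) denq (v 0 t').
have hwD t : (w t)%:~R = v 0 t * D%:~R :> rat.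
  by rewrite /w /D [X in _ = _ * X%:~R](bigD1 t) //= !intrM numqE mulrA.
have D0 : D != 0 by rewrite gt_eqF // prodr_gt0 // => t _; exact: denq_gt0.
have wrel i : \sum_t w t * Aint (enum_val t) i = 0.
  apply: (@intr_inj rat); rewrite rmorph_sum rmorph0 /=.
  under eq_bigr => t _ do rewrite intrM hwD mulrAC.
  rewrite -mulr_suml.
  have := congr1 (fun M : 'M[rat]_(1, k.+1) => M 0 i) hv; rewrite mxE [RHS]mxE => h.
  rewrite (_ : \sum_t v 0 t * (Aint (enum_val t) i)%:~R = 0) ?mul0r //.
  by rewrite -[RHS]h; apply: eq_bigr => t _; rewrite mxE.
have wt0 : w t0 != 0.
  by rewrite -(intr_eq0 rat) hwD mulf_neq0 // intr_eq0.
have wt0R : (w t0)%:~R != 0 :> R by rewrite intr_eq0.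
pose beta j := sth st j + (if j == enum_val t0 then pi / (w t0)%:~R else 0).
exists beta => -[ops hops].
have [_ [_ hr3]] := run_spec alpha hr ops st.
set U := uvec ops.
have : forall t : 'I_#|S|, exists z : int, beta (enum_val t) - sth st (enum_val t) =
   \sum_i (Aint (enum_val t) i)%:~R * U i 0 + z%:~R * (2 * pi).
  move=> t; have [z1 e1] := hops _ (enum_valP t); have [z2 e2] := hr3 (enum_val t).
  exists (z2 - z1); rewrite -Au_eff in e2.
  have eA : (Amat R alpha *m uvec ops) (enum_val t) 0 =
            \sum_i (Aint (enum_val t) i)%:~R * U i 0.
    by rewrite mxE; apply: eq_bigr => i _; rewrite AE.
  rewrite eA in e2; rewrite intrB; lra.
move=> /choice [z hz].
have Hsum : \sum_(t < #|S|) (w t)%:~R * (beta (enum_val t) - sth st (enum_val t)) =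
            (\sum_t w t * z t)%:~R * (2 * pi) :> R.
  under eq_bigr => t _ do rewrite hz mulrDr.
  rewrite big_split /=.
  have -> : \sum_(t < #|S|) (w t)%:~R * \sum_i (Aint (enum_val t) i)%:~R * U i 0 = 0 :> R.
    under eq_bigr => t _ do rewrite mulr_sumr.
    rewrite exchange_big /= big1 // => i _.
    transitivity ((\sum_t w t * Aint (enum_val t) i)%:~R * U i 0 : R).
      rewrite (rmorph_sum (intr : {rmorphism int -> R})) mulr_suml; apply: eq_bigr => t _; by rewrite [in RHS](rmorphM (intr : {rmorphism int -> R})) /= mulrA.
    by rewrite wrel rmorph0 mul0r.
  rewrite add0r (rmorph_sum (intr : {rmorphism int -> R})) mulr_suml; apply: eq_bigr => t _; rewrite [in RHS](rmorphM (intr : {rmorphism int -> R})) /= mulrA.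
  by [].
have bt t : beta (enum_val t) - sth st (enum_val t) =
            (if enum_val t == enum_val t0 then pi / (w t0)%:~R else 0).
  by rewrite /beta addrC addKr.
have {}Hsum : \sum_(t < #|S|) (w t)%:~R *
    (if enum_val t == enum_val t0 then pi / (w t0)%:~R else 0) =
    (\sum_t w t * z t)%:~R * (2 * pi) :> R.
  by rewrite -Hsum; apply: eq_bigr => t _; rewrite bt.
rewrite (bigD1 t0) //= eqxx big1 ?addr0 in Hsum; last first.
  move=> t ht; case: eqP => [/enum_val_inj et|]; last by rewrite mulr0.
  by rewrite et eqxx in ht.
rewrite mulrC divfK // in Hsum.
set N := \sum_t w t * z t in Hsum.
have pi0 := pi_gt0 R.
have h1 : (1 : R) = 2 * N%:~R.
  apply: (mulIf (x := pi)); first by rewrite gt_eqF.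
  rewrite mul1r {1}Hsum; ring.
have : (1 : int) = 2 * N by apply: (@intr_inj R); rewrite intrM (_ : (2:int)%:~R = 2 :> R) // -h1.
lia.
Qed.
Unset Implicit Arguments. Set Strict Implicit.

(* m = k.+1 groups: G_1..G_k given by alpha (indexed by 'I_k), G_m = empty. *)
Theorem mainTheorem4 (R : realType) (n k : nat) (r : R)
    (alpha : 'I_k -> 'I_n -> bool)
    (hr : 0 < r) (hn : (3 <= n)%N)
    (hdistinct : forall j1 j2 : 'I_n, j1 <> j2 -> exists i, alpha i j1 <> alpha i j2)
    (hnot0 : forall j : 'I_n, exists i, alpha i j = true)
    (hnot1 : forall j : 'I_n, exists i, alpha i j = false) :
  (* (a) *)
  (forall (ops : seq (rop R k)) (st : state R n),
      sx (run r alpha ops st) = sx st /\ sy (run r alpha ops st) = sy st /\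
      forall j : 'I_n,
        eqmod2pi (sth (run r alpha ops st) j - sth st j)
                 ((Amat R alpha *m uvec ops) j 0)) /\
  (* (b) *)
  (forall (st : state R n) (j1 j2 j3 : 'I_n) (b1 b2 b3 : R),
      j1 <> j2 -> j1 <> j3 -> j2 <> j3 ->
      exists ops : seq (rop R k),
        eqmod2pi (sth (run r alpha ops st) j1) b1 /\
        eqmod2pi (sth (run r alpha ops st) j2) b2 /\
        eqmod2pi (sth (run r alpha ops st) j3) b3) /\
  (* (c) *)
  ((\rank (Amat R alpha) <= k.+1)%N /\
   forall (S : {set 'I_n}) (st : state R n), (k.+1 < #|S|)%N ->
     exists beta : 'I_n -> R,
       ~ exists ops : seq (rop R k),
           forall j, j \in S -> eqmod2pi (sth (run r alpha ops st) j) (beta j)).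
Proof.
split.
  move=> ops st; have [h1 [h2 h3]] := run_spec alpha hr ops st.
  split=> //; split=> // j; have [z e] := h3 j.
  by exists z; rewrite Au_eff e; ring.
split.
  move=> st j1 j2 j3 b1 b2 b3 d12 d13 d23.
  have [u [e1 [e2 e3]]] := solve3 hdistinct (b1 - sth st j1) (b2 - sth st j2)
     (b3 - sth st j3) d12 d13 d23.
  exists (realize u).
  have [_ [_ h3]] := run_spec alpha hr (realize u) st.
  have [z1 f1] := h3 j1; have [z2 f2] := h3 j2; have [z3 f3] := h3 j3.
  rewrite realize_eff e1 in f1; rewrite realize_eff e2 in f2; rewrite realize_eff e3 in f3.
  split; [exists z1; rewrite f1; ring | split; [exists z2; rewrite f2; ring | exists z3; rewrite f3; ring]].
split; first exact: rank_leq_col.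
move=> S st hS; exact: (@partc R n k r alpha hr S st hS).
Qed.
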